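(* Let $E$ be a real Banach space which is uniformly convex with modulus of convexity $\delta_E$. Then for all $\varepsilon,\eta$ with $0<\varepsilon/2<\eta<\varepsilon<2$, $$\frac{\delta_E(\eta)}{\eta}\le \frac{\delta_E(\varepsilon)}{\varepsilon}-2\,\frac{\varepsilon-\eta}{\varepsilon\,\eta}\,\delta_E(r(\varepsilon)),\qquad\text{where } r(\varepsilon)=\frac14\left(\frac{\varepsilon}{2}-\delta_E(\varepsilon)\right).$$
   Context: $B_r(a)=\{x\in E:\|x-a\|\le r\}$. For a closed convex set $A\subset E$ its modulus of convexity is $\delta_A(\varepsilon)=\sup\{\delta\ge 0:\ B_\delta(\frac{x_1+x_2}{2})\subset A \text{ for all } x_1,x_2\in A \text{ with } \|x_1-x_2\|=\varepsilon\}$, $\varepsilon\in[0,\operatorname{diam}A)$. The modulus of convexity of the space is $\delta_E=\delta_{B_1(0)}$, defined on $[0,2)$, and $E$ is uniformly convex if $\delta_E(\varepsilon)>0$ for all $\varepsilon\in(0,2)$. *)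

(* Defs.v *)
From HB Require Import structures.
From mathcomp Require Import all_boot all_order all_algebra.
From mathcomp Require Import all_classical all_reals all_analysis.
Set Implicit Arguments. Unset Strict Implicit. Unset Printing Implicit Defensive.
Import Order.TTheory GRing.Theory Num.Theory.
Import numFieldNormedType.Exports.
Local Open Scope classical_set_scope.
Local Open Scope ring_scope.

Definition cball {R : realType} {E : normedModType R} (a : E) (r : R) : set E :=
  [set x | `|x - a| <= r].

Definition modulus_of_convexity_set {R : realType} {E : normedModType R}
    (A : set E) (eps : R) : R :=
  sup [set d : R | 0 <= d /\
        forall x1 x2 : E, A x1 -> A x2 -> `|x1 - x2| = eps ->
          cball (2^-1 *: (x1 + x2)) d `<=` A].

Definition modulus_of_convexity {R : realType} (E : normedModType R) (eps : R) : R :=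
  modulus_of_convexity_set (cball (0 : E) 1) eps.

Definition uniformly_convex {R : realType} (E : normedModType R) : Prop :=
  forall eps : R, 0 < eps < 2 -> 0 < modulus_of_convexity E eps.

(* Main.v *)
Require Import Defs.
From HB Require Import structures.
From mathcomp Require Import all_boot all_order all_algebra.
From mathcomp Require Import all_classical all_reals all_analysis.
From mathcomp Require Import ring lra.
Set Implicit Arguments. Unset Strict Implicit.
Import Order.TTheory GRing.Theory Num.Theory.
Import numFieldNormedType.Exports.
Local Open Scope classical_set_scope.
Local Open Scope ring_scope.

Section Aux.
Variables (R : realType) (E : normedModType R) (u : E).
Hypothesis hu : `|u| = 1.

Local Notation dl := (modulus_of_convexity E).
Local Notation B1 := (cball (0:E) 1).

Lemma inB (x : E) : B1 x <-> `|x| <= 1.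
Proof. by rewrite /cball /= subr0. Qed.

Definition dir (m : E) : E := if m == 0 then u else `|m|^-1 *: m.

Lemma dir_norm m : `|dir m| = 1.
Proof.
rewrite /dir; case: eqP => [//|/eqP hm].
by rewrite normrZ ger0_norm ?invr_ge0 // mulVf // normr_eq0.
Qed.

Lemma dir_comb (m : E) a b : 0 <= a -> 0 <= b ->
  `|a *: dir m + b *: m| = a + b * `|m|.
Proof.
move=> ha hb; rewrite /dir; case: eqP => [->|/eqP hm].
  by rewrite normr0 mulr0 scaler0 addr0 normrZ hu mulr1 addr0 ger0_norm.
have nm : 0 < `|m| by rewrite normr_gt0.
rewrite scalerA -scalerDl normrZ ger0_norm.
  by rewrite mulrDl -mulrA mulVf ?mulr1 // lt0r_neq0.
by rewrite addr_ge0 // mulr_ge0 // invr_ge0 ltW.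
Qed.

Lemma dir_dist (m : E) : `|m| <= 1 -> `|m - dir m| <= 1 - `|m|.
Proof.
move=> hm1; rewrite /dir; case: eqP => [->|/eqP hm].
  by rewrite sub0r normrN hu normr0 subr0.
have nm : 0 < `|m| by rewrite normr_gt0.
rewrite -{1}(scale1r m) -scalerBl normrZ.
rewrite ler0_norm; last first.
  by rewrite subr_le0 invf_ge1.
by rewrite opprB mulrBl mulVf ?lt0r_neq0 // mul1r.
Qed.

Definition Sset (e : R) := [set d : R | 0 <= d /\
        forall x1 x2 : E, B1 x1 -> B1 x2 -> `|x1 - x2| = e ->
          cball (2^-1 *: (x1 + x2)) d `<=` B1].

Lemma S_ub e x1 x2 d : B1 x1 -> B1 x2 -> `|x1 - x2| = e -> Sset e d ->
  d <= 1 - `|2^-1 *: (x1 + x2)|.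
Proof.
move=> h1 h2 he [d0 hd].
have := hd _ _ h1 h2 he (2^-1 *: (x1 + x2) + d *: dir (2^-1 *: (x1 + x2))).
set m := 2^-1 *: (x1 + x2).
rewrite /cball /= addrAC subrr add0r normrZ dir_norm mulr1 ger0_norm // lexx subr0.
move=> /(_ isT).
have := @dir_comb m d 1 d0 ler01; rewrite scale1r mul1r addrC => ->.
lra.
Qed.

Lemma S_0 e x1 x2 : B1 x1 -> B1 x2 -> `|x1 - x2| = e -> Sset e 0.
Proof.
move=> _ _ _; split => // y1 y2 /inB h1 /inB h2 _ y.
rewrite /cball /= normr_le0 subr_eq0 => /eqP ->; apply/inB.
rewrite normrZ ger0_norm ?invr_ge0 //.
have := ler_normD y1 y2; lra.
Qed.

Lemma S_has_sup e x1 x2 : B1 x1 -> B1 x2 -> `|x1 - x2| = e -> has_sup (Sset e).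
Proof.
move=> h1 h2 he; split; first by exists (0:R); exact: (S_0 h1 h2 he).
exists (1 - `|2^-1 *: (x1 + x2)|) => d; exact: S_ub.
Qed.

Lemma dl_le e x1 x2 : B1 x1 -> B1 x2 -> `|x1 - x2| = e ->
  dl e <= 1 - `|2^-1 *: (x1 + x2)|.
Proof.
move=> h1 h2 he; apply: ge_sup; first by exists 0; exact: (S_0 h1 h2 he).
move=> d; exact: S_ub.
Qed.

Lemma dl_ge0 e x1 x2 : B1 x1 -> B1 x2 -> `|x1 - x2| = e -> 0 <= dl e.
Proof.
move=> h1 h2 he; exact: (sup_upper_bound (S_has_sup h1 h2 he) (S_0 h1 h2 he)).
Qed.

Lemma pair_ex e : 0 <= e <= 2 ->
  B1 ((e/2) *: u) /\ B1 (- ((e/2) *: u)) /\ `|(e/2) *: u - - ((e/2) *: u)| = e.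
Proof.
move=> /andP[e0 e2]; rewrite !inB normrN normrZ hu mulr1 ger0_norm ?divr_ge0 //.
split; first lra. split; first lra.
by rewrite opprK -scalerDl normrZ hu mulr1 ger0_norm; [field|lra].
Qed.

Lemma dl_approx e g : 0 <= e <= 2 -> 0 < g -> exists x1 x2,
  [/\ B1 x1, B1 x2, `|x1 - x2| = e & 1 - `|2^-1 *: (x1 + x2)| < dl e + g].
Proof.
move=> he g0; have [h1 [h2 h3]] := pair_ex he.
apply: contrapT => H.
have H' : forall y1 y2, B1 y1 -> B1 y2 -> `|y1 - y2| = e ->
    dl e + g <= 1 - `|2^-1 *: (y1 + y2)|.
  move=> y1 y2 k1 k2 k3; rewrite leNgt; apply/negP => hlt; apply: H.
  by exists y1, y2.
have hS : Sset e (dl e + g).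
  split; first by apply: addr_ge0; [exact: dl_ge0 h1 h2 h3 | exact: ltW].
  move=> y1 y2 k1 k2 k3 y; rewrite /cball /= subr0 => hy.
  have := H' _ _ k1 k2 k3.
  have := ler_distD (2^-1 *: (y1 + y2)) y 0; rewrite !subr0.
  move: hy; set a := `|y - _|; set b := `|_ *: _|; set c := `|y|.
  lra.
have := sup_upper_bound (S_has_sup h1 h2 h3) hS.
rewrite /=; rewrite -/(modulus_of_convexity_set B1 e) -/(dl e).
lra.
Qed.

Lemma key e t s x1 x2 m : 0 < t <= 1 -> 0 <= s -> B1 x1 -> B1 x2 ->
  `|x1 - x2| = e -> m = 2^-1 *: (x1 + x2) ->
  `|(1 - t) *: dir m + t *: x1| <= 1 - s ->
  `|(1 - t) *: dir m + t *: x2| <= 1 - s ->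
  dl (t * e) <= t * (1 - `|m|) - s.
Proof.
move=> /andP[t0 t1] s0 h1 h2 he hm k1 k2.
set c := 1 - t + s.
have c0 : 0 <= c by rewrite /c; lra.
have zB : forall x, `|(1 - t) *: dir m + t *: x| <= 1 - s ->
    B1 (c *: dir m + t *: x).
  move=> x k; apply/inB.
  have -> : c *: dir m + t *: x = ((1 - t) *: dir m + t *: x) + s *: dir m.
    by rewrite addrAC -scalerDl.
  have := ler_normD ((1 - t) *: dir m + t *: x) (s *: dir m).
  rewrite normrZ dir_norm mulr1 ger0_norm //; lra.
have := dl_le (zB _ k1) (zB _ k2) (erefl _).
rewrite opprD addrACA subrr add0r -scalerBr normrZ (ger0_norm (ltW t0)) he.
have -> : 2^-1 *: (c *: dir m + t *: x1 + (c *: dir m + t *: x2))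
    = c *: dir m + t *: m.
  rewrite addrACA -scalerDl -(scalerDr t) (scalerDr 2^-1) !scalerA hm scalerA.
  by congr (_ *: _ + _ *: _); [field | exact: mulrC].
rewrite (dir_comb _ c0 (ltW t0)) /c; lra.
Qed.

Lemma dl_hom eta eps : 0 < eta <= eps -> eps <= 2 -> dl eta <= eta / eps * dl eps.
Proof.
move=> /andP[h0 h1] h2; apply/ler_addgt0Pr => g g0.
have e0 : 0 < eps by lra.
have [t ht] : exists t, t = eta / eps by eexists.
rewrite -ht.
have t0 : 0 < t by rewrite ht divr_gt0.
have t1 : t <= 1 by rewrite ht ler_pdivrMr // mul1r.
have te : t * eps = eta by rewrite ht; field; lra.
have [x1 [x2 [k1 k2 k3 k4]]] :=
  @dl_approx eps (g / t) (ltac:(apply/andP; split; lra)) (divr_gt0 g0 t0).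
have k : forall x, B1 x -> `|(1 - t) *: dir (2^-1 *: (x1 + x2)) + t *: x| <= 1 - 0.
  move=> x /inB hx; have := ler_normD ((1 - t) *: dir (2^-1 *: (x1 + x2))) (t *: x).
  rewrite normrZ normrZ dir_norm (ger0_norm (ltW t0)) (@ger0_norm _ (1 - t)); last lra.
  have : t * `|x| <= t by rewrite ler_piMr // ltW.
  rewrite mulr1 subr0; move: (t * `|x|) => a; move: (`|_ + _|) => b; lra.
have ht01 : 0 < t <= 1 by apply/andP; split.
have K := key ht01 (lexx 0) k1 k2 k3 (erefl _) (k _ k1) (k _ k2).
rewrite te subr0 in K.
have H2 : t * (1 - `|2^-1 *: (x1 + x2)|) <= t * (dl eps + g / t).
  by rewrite ler_wpM2l ?ltW.
rewrite [t * (dl eps + _)]mulrDr (mulrC t (g / t)) mulfVK ?lt0r_neq0 // in H2.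
move: K H2; move: (t * (1 - _)) => a; move: (t * dl eps) => b; lra.
Qed.

Lemma half_u : 2^-1 *: (u + u) = u.
Proof.
rewrite -{1 2}(scale1r u) -scalerDl scalerA.
have -> : 2^-1 * (1 + 1) = 1 :> R by field.
by rewrite scale1r.
Qed.

Lemma dl0 : dl 0 <= 0.
Proof.
have hB : B1 u by apply/inB; rewrite hu.
have := dl_le hB hB (erefl _).
by rewrite subrr normr0 half_u hu subrr.
Qed.

Lemma dl_mono r d : 0 <= r -> r <= d -> d <= 2 -> dl r <= dl d.
Proof.
move=> r0 rd d2.
have d0 : 0 <= d by apply: le_trans rd.
have [p1 [p2 p3]] := pair_ex (ltac:(apply/andP; split; [exact: d0|exact: d2]) : 0 <= d <= 2).
have hd0 := dl_ge0 p1 p2 p3.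
have [->|rn0] := eqVneq r 0; first by apply: le_trans dl0 hd0.
have r0' : 0 < r by rewrite lt_neqAle eq_sym rn0 r0.
have hrd : 0 < r <= d by apply/andP; split.
apply: (le_trans (dl_hom hrd d2)).
apply: ler_piMl => //.
by rewrite ler_pdivrMr ?mul1r //; apply: lt_le_trans rd.
Qed.

Lemma conv w x t : B1 w -> B1 x -> 2^-1 <= t -> t <= 1 ->
  `|(1 - t) *: w + t *: x| <= 1 - 2 * (1 - t) * dl `|w - x|.
Proof.
move=> hw hx t1 t2.
have -> : (1 - t) *: w + t *: x
    = (2 * (1 - t)) *: (2^-1 *: (w + x)) + (2 * t - 1) *: x.
  rewrite scalerA scalerDr -addrA -scalerDl.
  have -> : 2 * (1 - t) * 2^-1 = 1 - t by field.
  by have -> : 1 - t + (2 * t - 1) = t by ring.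
have hm := dl_le hw hx (erefl _).
have := ler_normD ((2 * (1 - t)) *: (2^-1 *: (w + x))) ((2 * t - 1) *: x).
rewrite normrZ [`|(2 * t - 1) *: x|]normrZ (@ger0_norm _ (2 * (1 - t))); last lra.
rewrite (@ger0_norm _ (2 * t - 1)); last lra.
have a1 : 2 * (1 - t) * `|2^-1 *: (w + x)| <= 2 * (1 - t) * (1 - dl `|w - x|).
  by apply: ler_wpM2l => //; lra.
have a2 : (2 * t - 1) * `|x| <= 2 * t - 1.
  by apply: ler_piMr; [lra | exact/inB].
move: a1 a2; move: (dl `|w - x|) => D.
move: (`|2^-1 *: (w + x)|) (`|x|) => a b.
move: (`|_ + _|) => c.
nra.
Qed.
End Aux.

Unset Implicit Arguments.

Theorem lemma1p2 (R : realType) (E : completeNormedModType R)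
  (hE : uniformly_convex E) (eps eta : R) :
  0 < eps / 2 -> eps / 2 < eta -> eta < eps -> eps < 2 ->
  modulus_of_convexity E eta / eta <=
    modulus_of_convexity E eps / eps
    - 2 * ((eps - eta) / (eps * eta))
        * modulus_of_convexity E ((eps / 2 - modulus_of_convexity E eps) / 4).
Proof.
move=> he0 h1 h2 h3.
have e0 : 0 < eps by lra.
have eta0 : 0 < eta by lra.
have [x0 x0n] : exists x : E, x != 0.
  apply: contrapT => H.
  have H0 : forall x : E, x = 0.
    by move=> x; apply: contrapT => hx; apply: H; exists x; apply/eqP.
  have h12 : (0:R) < (1:R) < (2:R) by apply/andP; split; lra.
  have := hE 1 h12.
  rewrite /modulus_of_convexity /modulus_of_convexity_set sup_out ?ltxx //.
  move=> [_ [M hM]].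
  have : `|M| + 1 <= M.
    apply: hM; split; first by rewrite addr_ge0.
    move=> y1 y2 _ _ _ y _; rewrite /cball /= (H0 y) subrr normr0; exact: ler01.
  have := ler_norm M; lra.
pose u := `|x0|^-1 *: x0.
have hu : `|u| = 1.
  by rewrite /u normrZ ger0_norm ?invr_ge0 // mulVf // normr_eq0.
clearbody u.
have [t ht] : exists t, t = eta / eps by eexists.
have te : t * eps = eta by rewrite ht; field; apply: lt0r_neq0.
have t0 : 0 < t by rewrite ht divr_gt0.
have t1 : t <= 1 by rewrite ht ler_pdivrMr // mul1r; lra.
have t2 : 2^-1 <= t by rewrite ht ler_pdivlMr //; lra.
have [D hD] : exists D, D = modulus_of_convexity E eps by eexists.
rewrite -hD.
have epsP : 0 <= eps <= 2 by apply/andP; split; lra.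
have [p1 [p2 p3]] := pair_ex hu epsP.
have D0 : 0 <= D by have := dl_ge0 hu p1 p2 p3; rewrite hD.
have Dle : D <= eps / 2.
  have h22 : 0 < eps <= 2 by apply/andP; split; lra.
  have := dl_hom hu h22 (lexx 2).
  have two : (0:R) <= (2:R) <= (2:R) by apply/andP; split; lra.
  have [q1 [q2 q3]] := pair_ex hu two.
  have := dl_le hu q1 q2 q3.
  rewrite subrr scaler0 normr0 subr0 -hD => hq.
  have : eps / 2 * modulus_of_convexity E 2 <= eps / 2 by apply: ler_piMr => //; lra.
  lra.
have [r hr] : exists r, r = (eps / 2 - D) / 4 by eexists.
rewrite -hr.
have r0 : 0 <= r by rewrite hr; lra.
have r2 : r <= 2 by rewrite hr; lra.
have rP : 0 <= r <= 2 by apply/andP; split.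
have [s1 [s2 s3]] := pair_ex hu rP.
have dr0 : 0 <= modulus_of_convexity E r by have := dl_ge0 hu s1 s2 s3.
suff main : modulus_of_convexity E eta <= t * D - 2 * (1 - t) * modulus_of_convexity E r.
  have -> : D / eps - 2 * ((eps - eta) / (eps * eta)) * modulus_of_convexity E r
      = (t * D - 2 * (1 - t) * modulus_of_convexity E r) / eta.
    rewrite ht; field; apply/andP; split; exact: lt0r_neq0.
  by apply: ler_wpM2r => //; rewrite invr_ge0 ltW.
have [->|rn0] := eqVneq r 0.
  have := dl0 hu.
  have etaP : 0 < eta <= eps by apply/andP; split; lra.
  have := dl_hom hu etaP (ltW h3); rewrite -ht -hD.
  have : 0 <= 1 - t by lra.
  move: (modulus_of_convexity E 0) (modulus_of_convexity E eta) => a b.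
  nra.
have rp : 0 < r by rewrite lt_neqAle eq_sym rn0 r0.
apply/ler_addgt0Pr => g g0.
set gam := Num.min (g / t) (3 * r).
have gam0 : 0 < gam by rewrite lt_min divr_gt0 //=; lra.
have gam1 : gam <= g / t by rewrite ge_min lexx.
have gam2 : gam <= 3 * r by rewrite ge_min lexx orbT.
have [x1 [x2 [k1 k2 k3 k4]]] := dl_approx hu epsP gam0.
rewrite -hD in k4.
set m := 2^-1 *: (x1 + x2) in k4.
have hm1 : `|m| <= 1.
  have := ler_normD x1 x2; move: k1 k2 => /inB k1 /inB k2.
  rewrite /m normrZ ger0_norm ?invr_ge0 //; lra.
have hdd := dir_dist hu hm1.
set w := dir u m in hdd.
have hw : cball (0:E) 1 w by apply/inB; rewrite /w dir_norm.
have hh : (2^-1 + 2^-1 : R) = 1 by field.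
have em1 : `|x1 - m| = eps / 2.
  have hx : x1 = 2^-1 *: x1 + 2^-1 *: x1 by rewrite -scalerDl hh scale1r.
  have -> : x1 - m = 2^-1 *: (x1 - x2).
    by rewrite /m scalerDr {1}hx opprD addrA addrK scalerBr.
  by rewrite normrZ k3 ger0_norm ?invr_ge0 // mulrC.
have em2 : `|x2 - m| = eps / 2.
  have hx : x2 = 2^-1 *: x2 + 2^-1 *: x2 by rewrite -scalerDl hh scale1r.
  have -> : x2 - m = - (2^-1 *: (x1 - x2)).
    by rewrite /m scalerDr {1}hx scalerBr opprB (addrC (2^-1 *: x1)) addrKA.
  by rewrite normrN normrZ k3 ger0_norm ?invr_ge0 // mulrC.
have bnd : forall x, cball (0:E) 1 x -> `|x - m| = eps / 2 ->
    `|(1 - t) *: w + t *: x| <= 1 - 2 * (1 - t) * modulus_of_convexity E r.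
  move=> x hx hxm.
  have c := conv hu hw hx t2 t1.
  have d2 : `|w - x| <= 2.
    have := ler_normB w x; move: hw hx => /inB hw /inB hx; lra.
  have dr : r <= `|w - x|.
    have := ler_distD w x m; rewrite hxm distrC (distrC w m).
    rewrite hr; lra.
  have := dl_mono hu r0 dr d2.
  have : 0 <= 1 - t by lra.
  move: c; move: (modulus_of_convexity E r) (modulus_of_convexity E `|w - x|) => a b.
  move: (`|_ + _|) => c; nra.
have s0 : 0 <= 2 * (1 - t) * modulus_of_convexity E r.
  by apply: mulr_ge0 => //; lra.
have tP : 0 < t <= 1 by apply/andP; split.
have K := key hu tP s0 k1 k2 k3 (erefl m) (bnd _ k1 em1) (bnd _ k2 em2).
rewrite te -/w in K.
have H2 : t * (1 - `|m|) <= t * (D + g / t).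
  by rewrite ler_wpM2l ?ltW //; lra.
rewrite [t * (D + _)]mulrDr (mulrC t (g / t)) mulfVK ?lt0r_neq0 // in H2.
move: K H2; move: (t * (1 - _)) => a; move: (t * D) => b; lra.
Qed.
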